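(* For every integer $n\ge 1$, $$\Phi^{(2)}[a; bq^n, b'; c, c'; x, y] = \Phi^{(2)}[a; b, b'; c, c'; x, y] + \frac{bx(1-a)}{1-c} \sum_{k=1}^n q^{k-1} \Phi^{(2)}[aq; bq^k, b'; cq, c'; x, y]$$ and $$\Phi^{(2)}[a; bq^{-n}, b'; c, c'; x, y] = \Phi^{(2)}[a; b, b'; c, c'; x, y] - \frac{bx(1-a)}{1-c} \sum_{k=1}^n q^{-k} \Phi^{(2)}[aq; bq^{1-k}, b'; cq, c'; x, y].$$
   Context: Let $q$ be a complex number with $0<|q|<1$. For complex $z$ and integer $m\ge 0$, $(z;q)_m=\prod_{j=0}^{m-1}(1-zq^j)$, with $(z;q)_0=1$. The $q$-Appell function $\Phi^{(2)}$ is $$\Phi^{(2)}[a; b, b'; c, c'; x, y] = \sum_{m, n \geq 0} \frac{(a; q)_{m+n} (b; q)_m (b'; q)_n}{(q; q)_m (q; q)_n (c; q)_m (c'; q)_n} x^m y^n.$$ Identities are understood as identities of power series in $x,y$ (formal, or convergent for small $|x|,|y|$), with complex parameters chosen so that no denominator occurring vanishes. *)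

(* Defs.v *)
(* Complex numbers: R[i] = complex R over a real closed field R
   (mathcomp-real-closed); for R a realType this is the usual field C. *)
From mathcomp Require Import all_boot all_order all_algebra.
From mathcomp Require Export complex.
Set Implicit Arguments. Unset Strict Implicit. Unset Printing Implicit Defensive.
Import Order.TTheory GRing.Theory Num.Theory.
Local Open Scope ring_scope.

Definition qpoch (C : ringType) (q z : C) (m : nat) : C :=
  \prod_(j < m) (1 - z * q ^+ j).

(* A formal power series in x, y is given by its coefficient array:
   F m n = coefficient of x^m y^n. *)
Definition fps2 (C : Type) := nat -> nat -> C.

Definition Phi2 (C : fieldType) (q a b b' c c' : C) : fps2 C :=
  fun m n => qpoch q a (m + n) * qpoch q b m * qpoch q b' n
             / (qpoch q q m * qpoch q q n * qpoch q c m * qpoch q c' n).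

Definition mulX (C : ringType) (F : fps2 C) : fps2 C :=
  fun m n => if m is m'.+1 then F m' n else 0.

(* Main.v *)
Require Import Defs.
From mathcomp Require Import all_boot all_order all_algebra.
From mathcomp Require Import complex.
From mathcomp Require Import ring.
Import Order.TTheory GRing.Theory Num.Theory.
Local Open Scope ring_scope.

Lemma qpochSl {C : fieldType} (q z : C) m :
  qpoch q z m.+1 = (1 - z) * qpoch q (z * q) m.
Proof.
rewrite /qpoch big_ord_recl expr0 mulr1; congr (_ * _).
by apply: eq_bigr => i _; rewrite /bump /= exprS mulrA.
Qed.

Lemma qpochSr {C : fieldType} (q z : C) m :
  qpoch q z m.+1 = qpoch q z m * (1 - z * q ^+ m).
Proof. by rewrite /qpoch big_ord_recr. Qed.

Lemma step (C : fieldType) (q a b b' c c' : C)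
  (hq : forall m, qpoch q q m != 0)
  (hc : forall m : nat, qpoch q c m != 0)
  (hc' : forall m : nat, qpoch q c' m != 0) i j :
  Phi2 q a (b * q) b' c c' i j = Phi2 q a b b' c c' i j
  + (b * (1 - a) / (1 - c)) * mulX (Phi2 q (a * q) (b * q) b' (c * q) c') i j.
Proof.
case: i => [|m] /=.
  by rewrite /Phi2 /qpoch !big_ord0 mulr0 addr0.
rewrite /Phi2 addSn (qpochSl q a) (qpochSl q b m) (qpochSl q c m) (qpochSr q (b * q) m) (qpochSr q q m).
have h1 := hc m.+1; rewrite qpochSl mulf_eq0 negb_or in h1.
case/andP: h1 => h1c h1q.
have h2 := hq m.+1; rewrite qpochSr mulf_eq0 negb_or in h2.
case/andP: h2 => h2a h2b.
have h3 := hq j; have h4 := hc' j.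
rewrite -[b * q * _]mulrA.
set Q := qpoch q q m in h2a *; set P := qpoch q (a * q) (m + j).
set Bq := qpoch q (b * q) m; set B' := qpoch q b' j.
set Qn := qpoch q q j in h3 *; set Cq := qpoch q (c * q) m in h1q *.
set C' := qpoch q c' j in h4 *.
move: h2b; set t := q * q ^+ m => h2b.
field.
by rewrite h2a h2b h3 h1c h1q h4.
Qed.

Theorem theorem8 (R : rcfType) (q a b b' c c' : R[i])
  (hq0 : 0 < `|q|) (hq1 : `|q| < 1)
  (hc : forall m : nat, qpoch q c m != 0)
  (hc' : forall m : nat, qpoch q c' m != 0)
  (n : nat) (hn : (1 <= n)%N) :
  (forall i j : nat,
     Phi2 q a (b * q ^+ n) b' c c' i j =
     Phi2 q a b b' c c' i j
     + (b * (1 - a) / (1 - c)) *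
       mulX (fun i' j' => \sum_(1 <= k < n.+1)
               q ^+ (k - 1) * Phi2 q (a * q) (b * q ^+ k) b' (c * q) c' i' j') i j)
  /\
  (forall i j : nat,
     Phi2 q a (b * q ^- n) b' c c' i j =
     Phi2 q a b b' c c' i j
     - (b * (1 - a) / (1 - c)) *
       mulX (fun i' j' => \sum_(1 <= k < n.+1)
               q ^- k * Phi2 q (a * q) (b * q ^- (k - 1)) b' (c * q) c' i' j') i j).
Proof.
have q0 : q != 0 by rewrite -normr_gt0.
have hq : forall m, qpoch q q m != 0.
  move=> m; rewrite /qpoch; apply/prodf_neq0 => j _.
  rewrite subr_eq0 -exprS; apply/eqP => /(congr1 Num.norm).
  rewrite normrX normr1 => /eqP; apply/negP.
  have h : `|q| ^+ j.+1 < 1 by rewrite exprn_ilt1 // ltW.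
  by rewrite gt_eqF.
split=> i j.
  elim: n {hn} => [|n IH].
    rewrite expr0 mulr1; case: i => [|i] /=; first by rewrite mulr0 addr0.
    by rewrite big_geq // mulr0 addr0.
  rewrite exprSr mulrA (step _ _ _ _ _ _ _ hq hc hc') IH.
  rewrite -[b * q ^+ n * q]mulrA -exprSr.
  case: i {IH} => [|i] /=; first by rewrite !mulr0 !addr0.
  rewrite [in RHS]big_nat_recr //= subSS subn0 -addrA; congr (_ + _).
  ring.
elim: n {hn} => [|n IH].
  rewrite expr0 invr1 mulr1; case: i => [|i] /=; first by rewrite mulr0 subr0.
    by rewrite big_geq // mulr0 subr0.
have e : b * q ^- n = (b * q ^- n.+1) * q.
  by rewrite -mulrA exprS invfM mulrAC mulVf // mul1r.
move: IH; rewrite e (step _ _ _ _ _ _ _ hq hc hc') => IH.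
have -> : Phi2 q a (b * q ^- n.+1) b' c c' i j =
  Phi2 q a b b' c c' i j -
  (b * (1 - a) / (1 - c)) *
     mulX (fun i' j' => \sum_(1 <= k < n.+1)
        q ^- k * Phi2 q (a * q) (b * q ^- (k - 1)) b' (c * q) c' i' j') i j
  - (b * q ^- n.+1 * (1 - a) / (1 - c)) *
     mulX (Phi2 q (a * q) (b * q ^- n.+1 * q) b' (c * q) c') i j.
  by rewrite -IH addrK.
case: i {IH} => [|i] /=; first by rewrite !mulr0 !subr0.
rewrite [in RHS]big_nat_recr //= subSS subn0 -e -addrA; congr (_ + _); ring.
Qed.
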